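(* Let $f:X\to Y$ be a continuous surjection between topological spaces and let $\mathcal B$ be a $\pi$-base for $Y$ (consisting of non-empty open sets). Then the family $\{f^{-1}(V):V\in\mathcal B\}$ is a skeletal family if and only if $f$ is a skeletal map.
   Context: A continuous surjection $f:X\to Y$ is skeletal if for every non-empty open $U\subseteq X$ the closure of $f[U]$ has non-empty interior. A family $\mathcal P$ of open subsets of $X$ is a skeletal family if for every non-empty open $V\subseteq X$ there exists $W\in\mathcal P$ such that every non-empty $U\in\mathcal P$ with $U\subseteq W$ satisfies $U\cap V\neq\emptyset$. *)

(* Defs.v *)
From mathcomp Require Import all_boot all_order.
From mathcomp Require Import all_classical topology.
Set Implicit Arguments.
Unset Strict Implicit.
Unset Printing Implicit Defensive.
Local Open Scope classical_set_scope.

Definition pi_base {Y : topologicalType} (B : set (set Y)) : Prop :=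
  (forall V, B V -> open V /\ V !=set0) /\
  (forall U, open U -> U !=set0 -> exists2 V, B V & V `<=` U).

Definition skeletal_map {X Y : topologicalType} (f : X -> Y) : Prop :=
  forall U : set X, open U -> U !=set0 -> (interior (closure (f @` U))) !=set0.

Definition skeletal_family {X : topologicalType} (P : set (set X)) : Prop :=
  (forall U, P U -> open U) /\
  forall V : set X, open V -> V !=set0 ->
    exists2 W, P W &
      forall U, P U -> U !=set0 -> U `<=` W -> U `&` V !=set0.

(* Main.v *)
Require Import Defs.
From mathcomp Require Import all_boot all_order.
From mathcomp Require Import all_classical topology.
Local Open Scope classical_set_scope.

Theorem proposition2 (X Y : topologicalType) (f : X -> Y)
  (fcont : continuous f) (fsurj : set_surj setT setT f)
  (B : set (set Y)) (hB : pi_base B) :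
  skeletal_family [set f @^-1` V | V in B] <-> skeletal_map f.
Proof.
have fopen : forall A, open A -> open (f @^-1` A) by apply/continuousP.
have nb : forall (T : topologicalType) (A : set T) x, open A -> A x -> nbhs x A.
  by move=> T A x oA Ax; apply: open_nbhs_nbhs; split.
case: hB => hB1 hB2.
have presub : forall V W, f @^-1` V `<=` f @^-1` W -> V `<=` W.
  move=> V W H y Vy; have [x _ fx] := fsurj y I.
  by rewrite -fx; apply: H; rewrite /preimage /= fx.
have prene : forall V, V !=set0 -> f @^-1` V !=set0.
  move=> V [y Vy]; have [x _ fx] := fsurj y I; by exists x; rewrite /preimage /= fx.
split.
- move=> [_ Hsk] U oU neU.
  have [_ [W0 BW0 <-] HW] := Hsk U oU neU.
  have [oW0 [y W0y]] := hB1 _ BW0.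
  have sub : W0 `<=` closure (f @` U).
    move=> z W0z N NN.
    rewrite nbhsE in NN; case: NN => N' [oN' N'z] N'N.
    have [V' BV' V'sub] := hB2 (W0 `&` N') (openI oW0 oN') (ex_intro _ z (conj W0z N'z)).
    have [oV' neV'] := hB1 _ BV'.
    have [x [Vx Ux]] := HW (f @^-1` V') (ex_intro2 _ _ V' BV' erefl) (prene _ neV')
      (fun x Vx => (V'sub _ Vx).1).
    by exists (f x); split; [exists x | apply: N'N; exact: (V'sub _ Vx).2].
  exists y; apply: filterS sub _; exact: nb.
- move=> Hsk; split.
    by move=> _ [V BV <-]; apply: fopen; case: (hB1 _ BV).
  move=> V oV neV.
  have [y Iy] := Hsk V oV neV.
  rewrite /interior nbhsE in Iy; case: Iy => O [oO Oy] Osub.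
  have [W0 BW0 W0sub] := hB2 O oO (ex_intro _ y Oy).
  exists (f @^-1` W0); first by exists W0.
  move=> _ [V' BV' <-] neU Usub.
  have V'W0 := presub _ _ Usub.
  have [oV' [z V'z]] := hB1 _ BV'.
  have := Osub z (W0sub _ (V'W0 _ V'z)) V' (nb _ _ _ oV' V'z).
  by case=> _ [[x Vx <-] fxV']; exists x.
Qed.
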